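(* For every pair $(R,S)\in\{(R_1,R_4),(R_1,R_5),(R_2,R_4),(R_2,R_5),(R_3,R_5),(R_5,R_2),(R_5,R_3)\}$ we have $\mathsf{AP}(R,S)=\mathsf{C}$.
   Context: Tuples in $\{0,1\}^4$ are written as strings $abcd$. The relations $R_1,\dots,R_5\subseteq\{0,1\}^4$ are $R_1=\{0000,1000,0100,1100,1010,0110,1001,0101,0011,1011,0111,1111\}$, $R_2=\{0000,1000,0100,1100,1010,0101,0011,1111\}$, $R_3=\{0000,1100,1010,0101,0011,1011,0111,1111\}$, $R_4=\{0000,1100,1010,0101,0011,1111\}$, $R_5=\{0000,1100,1010,0110,1001,0101,0011,1111\}$. For $R,S\subseteq\{0,1\}^4$, a Boolean function $f\colon\{0,1\}^n\to\{0,1\}$ is analogy-preserving relative to $(R,S)$ if for all $\mathbf{a},\mathbf{b},\mathbf{c},\mathbf{d}\in\{0,1\}^n$ with $(a_i,b_i,c_i,d_i)\in R$ for every $i$ and such that $(f(\mathbf{a}),f(\mathbf{b}),f(\mathbf{c}),x)\in S$ for some $x\in\{0,1\}$, we have $(f(\mathbf{a}),f(\mathbf{b}),f(\mathbf{c}),f(\mathbf{d}))\in S$; $\mathsf{AP}(R,S)$ is the set of all such functions of all arities. $\mathsf{C}$ is the set of all constant Boolean functions (of all arities). *)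

(* Defs.v *)
From mathcomp Require Import all_boot.
Set Implicit Arguments. Unset Strict Implicit. Unset Printing Implicit Defensive.

(* A 4-tuple abcd in {0,1}^4, with 0 = false and 1 = true. *)
Definition quad := (bool * bool * bool * bool)%type.
Definition rel4 := seq quad.

Definition R1 : rel4 :=
  [:: (false, false, false, false);
      (true, false, false, false);
      (false, true, false, false);
      (true, true, false, false);
      (true, false, true, false);
      (false, true, true, false);
      (true, false, false, true);
      (false, true, false, true);
      (false, false, true, true);
      (true, false, true, true);
      (false, true, true, true);
      (true, true, true, true)].

Definition R2 : rel4 :=
  [:: (false, false, false, false);
      (true, false, false, false);
      (false, true, false, false);
      (true, true, false, false);
      (true, false, true, false);
      (false, true, false, true);
      (false, false, true, true);
      (true, true, true, true)].

Definition R3 : rel4 :=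
  [:: (false, false, false, false);
      (true, true, false, false);
      (true, false, true, false);
      (false, true, false, true);
      (false, false, true, true);
      (true, false, true, true);
      (false, true, true, true);
      (true, true, true, true)].

Definition R4 : rel4 :=
  [:: (false, false, false, false);
      (true, true, false, false);
      (true, false, true, false);
      (false, true, false, true);
      (false, false, true, true);
      (true, true, true, true)].

Definition R5 : rel4 :=
  [:: (false, false, false, false);
      (true, true, false, false);
      (true, false, true, false);
      (false, true, true, false);
      (true, false, false, true);
      (false, true, false, true);
      (false, false, true, true);
      (true, true, true, true)].

Definition boolfun (n : nat) := n.-tuple bool -> bool.

Definition analogy_preserving (R S : rel4) (n : nat) (f : boolfun n) : Prop :=
  forall a b c d : n.-tuple bool,
    (forall i : 'I_n, (tnth a i, tnth b i, tnth c i, tnth d i) \in R) ->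
    (exists x : bool, (f a, f b, f c, x) \in S) ->
    (f a, f b, f c, f d) \in S.

Definition AP (R S : rel4) : forall n, boolfun n -> Prop :=
  fun n f => analogy_preserving R S f.

Definition Cst : forall n, boolfun n -> Prop :=
  fun n f => exists c : bool, forall x, f x = c.

(* Main.v *)
Require Import Defs.
From mathcomp Require Import all_boot.

Ltac solve_fin Hc :=
  first [ by move: (Hc (ex_intro _ true erefl))
        | by move: (Hc (ex_intro _ false erefl)) ].

Lemma cst_ap R S n (f : boolfun n) :
  (true,true,true,true) \in S -> (false,false,false,false) \in S ->
  Cst f -> AP R S f.
Proof.
move=> H1 H0 [c Hc] a b cc d _ _; rewrite !Hc; by case: c H1 H0 Hc.
Qed.

Definition z0 n : n.-tuple bool := [tuple false | _ < n].
Definition z1 n : n.-tuple bool := [tuple true | _ < n].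

Lemma ap_cst_R2 S n (f : boolfun n) :
  (S = R4 \/ S = R5) -> AP R2 S f -> Cst f.
Proof.
move=> HS H; exists (f (z0 n)) => x; apply/eqP/negPn/negP => Hne.
have Hc := H (z0 n) x (z0 n) (z0 n).
have Hco : forall i, (tnth (z0 n) i, tnth x i, tnth (z0 n) i, tnth (z0 n) i) \in R2.
  by move=> i; rewrite !tnth_mktuple; case: (tnth x i).
move: (Hc Hco) Hne; case: (f x); case: (f (z0 n)) => // Hd _;
  case: HS => HS; rewrite HS in Hd; solve_fin Hd.
Qed.

Lemma ap_cst_R1 S n (f : boolfun n) :
  (S = R4 \/ S = R5) -> AP R1 S f -> Cst f.
Proof.
move=> HS H; apply: (@ap_cst_R2 S n f HS) => a b c d Hi; apply: H => i.
by move: (Hi i); case: (tnth a i); case: (tnth b i); case: (tnth c i); case: (tnth d i).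
Qed.

Lemma ap_cst_R3 n (f : boolfun n) : AP R3 R5 f -> Cst f.
Proof.
move=> H; exists (f (z0 n)) => x; apply/eqP/negPn/negP => Hne.
have Hc := H x (z0 n) (z1 n) (z1 n).
have Hco : forall i, (tnth x i, tnth (z0 n) i, tnth (z1 n) i, tnth (z1 n) i) \in R3.
  by move=> i; rewrite !tnth_mktuple; case: (tnth x i).
move: (Hc Hco) Hne; case: (f x); case: (f (z0 n)); case: (f (z1 n)) => // Hd _;
  solve_fin Hd.
Qed.

Lemma ap_cst_R5 S n (f : boolfun n) :
  (S = R2 \/ S = R3) -> AP R5 S f -> Cst f.
Proof.
move=> HS H; exists (f (z0 n)) => x; apply/eqP/negPn/negP => Hne.
have Hxy : forall u v : n.-tuple bool, (forall i : 'I_n, (tnth u i, tnth v i, tnth v i, tnth u i) \in R5).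
  by move=> u v i; case: (tnth u i); case: (tnth v i).
have Hc1 := H x (z0 n) (z0 n) x (Hxy _ _).
have Hc2 := H (z0 n) x x (z0 n) (Hxy _ _).
move: Hc1 Hc2 Hne; case: (f x); case: (f (z0 n)) => // Hd1 Hd2 _;
  case: HS => HS; rewrite HS in Hd1 Hd2; first [solve_fin Hd1 | solve_fin Hd2].
Qed.

Theorem mainTheorem16 (R S : rel4) :
  (R, S) = (R1, R4) \/ (R, S) = (R1, R5) \/ (R, S) = (R2, R4) \/
  (R, S) = (R2, R5) \/ (R, S) = (R3, R5) \/ (R, S) = (R5, R2) \/
  (R, S) = (R5, R3) ->
  forall (n : nat) (f : boolfun n), AP R S f <-> Cst f.
Proof.
move=> HRS n f; split; last first.
  by case: HRS => [[-> ->]|[[-> ->]|[[-> ->]|[[-> ->]|[[-> ->]|[[-> ->]|[-> ->]]]]]]];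
    apply: cst_ap.
case: HRS => [[-> ->]|[[-> ->]|[[-> ->]|[[-> ->]|[[-> ->]|[[-> ->]|[-> ->]]]]]]].
- by apply: ap_cst_R1; left.
- by apply: ap_cst_R1; right.
- by apply: ap_cst_R2; left.
- by apply: ap_cst_R2; right.
- exact: ap_cst_R3.
- by apply: ap_cst_R5; left.
- by apply: ap_cst_R5; right.
Qed.
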